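(* If $X$ is a crowded submaximal (Tychonoff) space, then $X$ has the property $(\kappa)$.
   Context: A space is crowded if it is non-empty and has no isolated points; it is submaximal if every dense subset is open. A family $\{A_\alpha\}$ of subsets of $X$ is strongly point-finite if there are open sets $U_\alpha\supseteq A_\alpha$ such that each point of $X$ lies in only finitely many $U_\alpha$. $X$ has property $(\kappa)$ if every pairwise disjoint sequence of finite subsets of $X$ has a strongly point-finite subsequence. All spaces are assumed Tychonoff. *)

(* Defs.v *)
From HB Require Import structures.
From mathcomp Require Import all_boot all_order all_algebra.
From mathcomp Require Import all_classical all_reals.
From mathcomp Require Import topology normedtype.
Set Implicit Arguments. Unset Strict Implicit. Unset Printing Implicit Defensive.
Import Order.TTheory GRing.Theory Num.Theory.
Import numFieldNormedType.Exports.
Local Open Scope classical_set_scope.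
Local Open Scope ring_scope.

Definition tychonoff_space (R : realType) (X : topologicalType) : Prop :=
  accessible_space X /\
  forall (B : set X) (x : X), closed B -> ~ B x ->
    exists f : X -> R, continuous f /\ f x = 0 /\ (forall y, B y -> f y = 1).

Definition crowded (X : topologicalType) : Prop :=
  (setT : set X) !=set0 /\ forall x : X, ~ isolated [set: X] x.

Definition submaximal (X : topologicalType) : Prop :=
  forall D : set X, dense D -> open D.

Definition strongly_point_finite (X : topologicalType) (A : nat -> set X) : Prop :=
  exists U : nat -> set X,
    (forall n, open (U n) /\ A n `<=` U n) /\
    (forall x : X, finite_set [set n | U n x]).

Definition property_kappa (X : topologicalType) : Prop :=
  forall F : nat -> set X,
    (forall n, finite_set (F n)) ->
    (forall n m, n <> m -> F n `&` F m = set0) ->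
    exists phi : nat -> nat, (forall n, (phi n < phi n.+1)%N) /\
      strongly_point_finite (F \o phi).
Arguments tychonoff_space : clear implicits.

(* Main.v *)
Require Import Defs.
From mathcomp Require Import all_boot all_order all_algebra.
From mathcomp Require Import all_classical all_reals.
From mathcomp Require Import topology normedtype.
Import Order.TTheory GRing.Theory Num.Theory.
Import numFieldNormedType.Exports.
Local Open Scope classical_set_scope.
Local Open Scope ring_scope.

Lemma regpt (R : realType) (X : topologicalType) : tychonoff_space R X ->
  forall (C : set X) x, closed C -> ~ C x ->
  exists p : set X * set X, open p.1 /\ p.1 x /\ p.1 `<=` p.2 /\ closed p.2 /\
    p.2 `&` C = set0.
Proof.
move=> [_ creg] C x cC nCx.
have [f [fc [fx f1]]] := creg C x cC nCx.
exists (f @^-1` [set r : R | r < 2^-1], f @^-1` [set r : R | r <= 2^-1]) => /=.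
split; first by apply: open_comp; [move=> y _; exact: fc| exact: open_lt].
split; first by rewrite /= fx invr_gt0.
split; first by move=> y /= /ltW.
split; first by apply: preimage_closed; [move=> y _; exact: fc| exact: closed_le].
apply/seteqP; split => // y [/= fy Cy].
have h : (2^-1 : R) < 1 by rewrite invf_lt1 // ltr1n.
by move: fy; rewrite f1 // leNgt h.
Qed.

Lemma regfin (R : realType) (X : topologicalType) : tychonoff_space R X ->
  forall (C G : set X), closed C -> finite_set G -> G `&` C = set0 ->
  exists p : set X * set X, open p.1 /\ G `<=` p.1 /\ p.1 `<=` p.2 /\ closed p.2 /\
    p.2 `&` C = set0.
Proof.
move=> ty C G cC fG GC.
have: forall x, exists p : set X * set X, ~ C x -> open p.1 /\ p.1 x /\ p.1 `<=` p.2 /\ closed p.2 /\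
    p.2 `&` C = set0.
  move=> x; case: (pselect (C x)) => Cx.
    by exists (set0, set0).
  have [p hp] := @regpt R X ty C x cC Cx; by exists p.
move=> /choice [q hq].
have nC : forall x, G x -> ~ C x.
  by move=> x Gx Cx; have : (G `&` C) x by []; rewrite GC.
exists (\bigcup_(x in G) (q x).1, \bigcup_(x in G) (q x).2) => /=.
split; first by apply: bigcup_open => i Gi; have [] := hq i (nC _ Gi).
split; first by move=> x Gx; exists x => //; have [_ []] := hq x (nC _ Gx).
split; first by move=> y [x Gx qy]; exists x => //; have [_ [_ [h _]]] := hq x (nC _ Gx); exact: h.
split; first by apply: closed_bigcup => // i Gi; have [_ [_ [_ []]]] := hq i (nC _ Gi).
apply/seteqP; split => // y [[x Gx qy] Cy].
have [_ [_ [_ [_ e]]]] := hq x (nC _ Gx).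
by have : ((q x).2 `&` C) y by []; rewrite e.
Qed.

Lemma finclosed (X : topologicalType) (A : set X) : accessible_space X ->
  finite_set A -> closed A.
Proof.
move=> ac fA.
have -> : A = \bigcup_(x in A) [set x].
  by apply/seteqP; split => [x Ax|y [x Ax ->]] //; exists x.
by apply: closed_bigcup => // x _; exact: accessible_closed_set1.
Qed.

Theorem mainTheorem4 (R : realType) (X : topologicalType) :
  tychonoff_space R X -> crowded X -> submaximal X -> property_kappa X.
Proof.
move=> ty _ sub F finF disj.
have ac : accessible_space X by case: ty.
have disj' : forall n m y, F n y -> F m y -> n = m.
  move=> n m y Fn Fm; apply: contrapT => nm.
  by have : (F n `&` F m) y by []; rewrite disj.
pose S := \bigcup_(n in setT) F n.
pose I := interior S.
pose N := S `\` I.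
have subN : forall A, A `<=` N -> closed A.
  move=> A AN; rewrite -(setCK A); apply: open_closedC; apply: sub.
  move=> O [x Ox] oO.
  case: (pselect (exists y, O y /\ ~ A y)) => [[y [Oy nAy]]|nex].
    by exists y.
  have OA : O `<=` A by move=> y Oy; apply: contrapT => nAy; apply: nex; exists y.
  have OS : O `<=` S by move=> y /OA /AN [].
  have OI : O `<=` I by rewrite -open_subsetE.
  by have [_ nIx] := AN x (OA x Ox); exfalso; exact: nIx (OI x Ox).
pose G n := F n `\` I.
pose C n := N `\` G n.
have : forall n, exists p : set X * set X, open p.1 /\ G n `<=` p.1 /\ p.1 `<=` p.2 /\
    closed p.2 /\ p.2 `&` C n = set0.
  move=> n; apply: (@regfin R X ty).
  - by apply: subN => y [].
  - by apply: sub_finite_set (finF n) => y [].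
  - by apply/seteqP; split => // y [Gy [_ nGy]].
move=> /choice [p hp].
pose W n := (p n).1.
pose K n := (p n).2.
pose V n := W n `\` \bigcup_(j in `I_n) K j.
pose Rn n := \bigcup_(m in `I_n) F m.
pose U n := (V n `|` I) `\` Rn n.
exists id; split => //.
exists U; split.
  move=> n; split.
    rewrite /U setDE; apply: openI; last first.
      apply: closed_openC; apply: closed_bigcup => // m _.
      exact: finclosed.
    apply: openU; last exact: open_interior.
    rewrite /V setDE; apply: openI; first by have [] := hp n.
    apply: closed_openC; apply: closed_bigcup => // j _.
    by have [_ [_ [_ []]]] := hp j.
  move=> y /= Fy; split; last first.
    by move=> [m /= mn Fm]; move: mn; rewrite (disj' _ _ _ Fm Fy) ltnn.
  case: (pselect (I y)) => Iy; first by right.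
  left; split.
    by have [_ [h _]] := hp n; apply: h.
  move=> [j /= jn Kj].
  have [_ [_ [_ [_ e]]]] := hp j.
  have : (K j `&` C j) y.
    split => //; split; first by split => //; exists n.
    move=> [Fj _]; move: jn; rewrite (disj' _ _ _ Fj Fy) ltnn //.
  by rewrite /K e.
move=> x.
case: (pselect (S x)) => [[m _ Fm]|nS].
  apply: (@sub_finite_set _ _ `I_m.+1); last exact: finite_II.
  move=> n /= [_ nR]; rewrite ltnNge; apply/negP => mn.
  by apply: nR; exists m.
have nI : ~ I x by move=> /interior_subset.
case: (pselect (exists k, V k x)) => [[k Vk]|nex].
  apply: (@sub_finite_set _ _ [set k]); last exact: finite_set1.
  move=> n /= [[Vn|//] _].
  have hWK : forall j, V j x -> K j x.
    by move=> j [Wj _]; have [_ [_ [h _]]] := hp j; apply: h.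
  case: (ltngtP n k) => // [nk|kn].
    by exfalso; case: Vk => _ h; apply: h; exists n => //; exact: hWK.
  by exfalso; case: Vn => _ h; apply: h; exists k => //; exact: hWK.
apply: (@sub_finite_set _ _ set0); last exact: finite_set0.
by move=> n /= [[Vn|//] _]; apply: nex; exists n.
Qed.
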